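(* Fix a two-receiver discrete memoryless broadcast channel $p(y,z|x)$ with finite alphabets. Let $\mathcal{C}$ be the set of rate pairs $(R_1,R_2)$ such that there exist discrete random variables $U,V,X,Y,Z$ with joint distribution $p(u,v)p(x|u,v)p(y,z|x)$ satisfying $R_1\le I(U;Y)$, $R_2\le I(V;Z)$, $R_1+R_2\le I(U;Y)+I(V;Z|U)$, $R_1+R_2\le I(V;Z)+I(U;Y|V)$. Let $\mathcal{C}_d$ be the set defined in the same way but with the additional restriction that $X$ is a deterministic function of $(U,V)$, i.e. $P(X=x|U=u,V=v)\in\{0,1\}$ for all $(u,v,x)$. Then $\mathcal{C}=\mathcal{C}_d$.
   Context: $p(y,z|x)$ is the channel transition probability from input alphabet $\mathcal{X}$ to outputs $\mathcal{Y}\times\mathcal{Z}$; $(Y,Z)$ are obtained from $X$ through the channel, so $(U,V)\to X\to (Y,Z)$ is a Markov chain. *)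

(* Defs.v *)
From mathcomp Require Import all_boot all_order all_algebra.
From mathcomp Require Import reals exp.
Set Implicit Arguments. Unset Strict Implicit. Unset Printing Implicit Defensive.
Import Order.TTheory GRing.Theory Num.Theory.
Local Open Scope ring_scope.

Section InfoTheory.
Variable R : realType.

Definition is_bc_channel (X Y Z : finType) (W : X -> Y -> Z -> R) : Prop :=
  (forall x y z, 0 <= W x y z) /\ (forall x, \sum_(y : Y) \sum_(z : Z) W x y z = 1).

Definition is_pmf2 (U V : finType) (p : U -> V -> R) : Prop :=
  (forall u v, 0 <= p u v) /\ \sum_(u : U) \sum_(v : V) p u v = 1.

Definition is_cond_pmf (U V X : finType) (q : U -> V -> X -> R) : Prop :=
  (forall u v x, 0 <= q u v x) /\ (forall u v, \sum_(x : X) q u v x = 1).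

(* Conditional mutual information I(A;B|C) of a joint pmf J(a,b,c),
   in nats, with the convention 0 log(...) = 0. *)
Definition cmi (A B C : finType) (J : A -> B -> C -> R) : R :=
  let Jc  := fun c => \sum_(a : A) \sum_(b : B) J a b c in
  let Jac := fun a c => \sum_(b : B) J a b c in
  let Jbc := fun b c => \sum_(a : A) J a b c in
  \sum_(a : A) \sum_(b : B) \sum_(c : C)
    (if J a b c == 0 then 0
     else J a b c * ln (J a b c * Jc c / (Jac a c * Jbc b c))).

Definition mi (A B : finType) (J : A -> B -> R) : R :=
  cmi (fun a b (_ : unit) => J a b).

Definition bc_region (det : bool) (X Y Z : finType) (W : X -> Y -> Z -> R)
  (R1 R2 : R) : Prop :=
  exists (U V : finType) (p : U -> V -> R) (q : U -> V -> X -> R),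
    is_pmf2 p /\ is_cond_pmf q /\
    (det -> forall u v x, q u v x = 0 \/ q u v x = 1) /\
    let P := fun u v x y z => p u v * q u v x * W x y z in
    let PUY := fun u y => \sum_(v : V) \sum_(x : X) \sum_(z : Z) P u v x y z in
    let PVZ := fun v z => \sum_(u : U) \sum_(x : X) \sum_(y : Y) P u v x y z in
    let PVZ_U := fun v z u => \sum_(x : X) \sum_(y : Y) P u v x y z in
    let PUY_V := fun u y v => \sum_(x : X) \sum_(z : Z) P u v x y z in
    [/\ R1 <= mi PUY,
        R2 <= mi PVZ,
        R1 + R2 <= mi PUY + cmi PVZ_U
      & R1 + R2 <= mi PVZ + cmi PUY_V].

End InfoTheory.

(* Main.v *)
Require Import Defs.
From mathcomp Require Import all_boot all_order all_algebra.
From mathcomp Require Import reals exp.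
From mathcomp Require Import ring lra.
From Stdlib Require Import FunctionalExtensionality.
Set Implicit Arguments. Unset Strict Implicit. Unset Printing Implicit Defensive.
Import Order.TTheory GRing.Theory Num.Theory.
Local Open Scope ring_scope.

Section Aux.
Variable R : realType.

Lemma ln_le_sub1 (x : R) : 0 < x -> ln x <= x - 1.
Proof.
move=> x0; have h := @le_ln1Dx R (x - 1).
have e : 1 + (x - 1) = x by ring.
rewrite e in h; apply: h; lra.
Qed.

Lemma gibbs_pt (P Q : R) : 0 <= P -> 0 <= Q -> (P != 0 -> 0 < Q) ->
  P - Q <= P * ln (P / Q).
Proof.
move=> P0 Q0 H; have [->|nz] := eqVneq P 0; first by rewrite sub0r mul0r oppr_le0.
have Qp := H nz; have Pp : 0 < P by rewrite lt0r nz.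
have := ln_le_sub1 (divr_gt0 Qp Pp).
rewrite !ln_div ?posrE // => h.
have := ler_wpM2l (ltW Pp) h.
have -> : P * (Q / P - 1) = Q - P by field; rewrite gt_eqF.
lra.
Qed.

Lemma ifz (x y : R) : (if x == 0 then 0 else x * y) = x * y.
Proof. by case: eqP => // ->; rewrite mul0r. Qed.

Lemma le_term (I : finType) (F : I -> R) i : (forall j, 0 <= F j) -> F i <= \sum_j F j.
Proof. by move=> F0; rewrite (bigD1 i) //= lerDl sumr_ge0. Qed.

Definition mC (A B C : finType) (J : A -> B -> C -> R) c := \sum_(a : A) \sum_(b : B) J a b c.
Definition mAC (A B C : finType) (J : A -> B -> C -> R) a c := \sum_(b : B) J a b c.
Definition mBC (A B C : finType) (J : A -> B -> C -> R) b c := \sum_(a : A) J a b c.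

Lemma cmiE (A B C : finType) (J : A -> B -> C -> R) : cmi J =
  \sum_a \sum_b \sum_c J a b c * ln (J a b c * mC J c / (mAC J a c * mBC J b c)).
Proof. rewrite /cmi; do 3 (apply: eq_bigr => ? _); by rewrite ifz. Qed.


Lemma sum_pair (A T : finType) (F : (A * T)%type -> R) :
  \sum_p F p = \sum_a \sum_t F (a, t).
Proof. by rewrite pair_big; apply: eq_bigr => -[]. Qed.

Lemma cmi_coarsenA (A B C T : finType) (J' : (A * T)%type -> B -> C -> R) :
  (forall a' b c, 0 <= J' a' b c) ->
  cmi (fun a b c => \sum_(t : T) J' (a, t) b c) <= cmi J'.
Proof.
move=> J0.
pose J := fun a b c => \sum_(t : T) J' (a, t) b c.
rewrite -/J.
have Jge0 : forall a b c, 0 <= J a b c by move=> *; apply: sumr_ge0.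
have eC : forall c, mC J' c = mC J c.
  by move=> c; rewrite /mC sum_pair; apply: eq_bigr => a _; apply: exchange_big.
have eBC : forall b c, mBC J' b c = mBC J b c by move=> b c; rewrite /mBC sum_pair.
rewrite !cmiE [X in _ <= X]sum_pair.
have -> : \sum_a \sum_b \sum_c J a b c * ln (J a b c * mC J c / (mAC J a c * mBC J b c)) =
  \sum_a \sum_t \sum_b \sum_c J' (a, t) b c * ln (J a b c * mC J c / (mAC J a c * mBC J b c)).
  apply: eq_bigr => a _.
  under eq_bigr => b _ do under eq_bigr => c _ do rewrite /J mulr_suml.
  under eq_bigr => b _ do rewrite exchange_big.
  by rewrite exchange_big.
rewrite -subr_ge0 -sumrB; apply: sumr_ge0 => a _; rewrite -sumrB; apply: sumr_ge0 => t _.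
pose Q b c := mAC J' (a, t) c * J a b c / mAC J a c.
apply: (@le_trans _ _ (\sum_b \sum_c (J' (a, t) b c - Q b c))).
  rewrite exchange_big; apply: sumr_ge0 => c _; rewrite sumrB subr_ge0.
  rewrite /Q -mulr_suml -mulr_sumr.
  have [->|nz] := eqVneq (mAC J a c) 0.
    by rewrite invr0 mulr0; apply: sumr_ge0.
  by rewrite mulfK.
rewrite -sumrB; apply: ler_sum => b _; rewrite -sumrB; apply: ler_sum => c _.
have Q0 : 0 <= Q b c.
  by rewrite /Q; apply: divr_ge0; [apply: mulr_ge0; [apply: sumr_ge0|]|apply: sumr_ge0].
have [e0|nz] := eqVneq (J' (a, t) b c) 0.
  by rewrite e0 !mul0r subrr sub0r oppr_le0.
have Jp : 0 < J' (a, t) b c by rewrite lt0r nz J0.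
have p1 : 0 < J a b c by apply: (lt_le_trans Jp); apply: (@le_term _ (fun t => J' (a, t) b c)).
have p2 : 0 < mAC J a c by apply: (lt_le_trans p1); apply: (@le_term _ (fun b => J a b c)).
have p3 : 0 < mBC J b c by apply: (lt_le_trans p1); apply: (@le_term _ (fun a => J a b c)).
have p4 : 0 < mC J c.
  apply: (lt_le_trans p2); apply: (@le_term _ (fun a => mAC J a c)) => ?; exact: sumr_ge0.
have p5 : 0 < mAC J' (a, t) c by apply: (lt_le_trans Jp); apply: (@le_term _ (fun b => J' (a, t) b c)).
have Qp : 0 < Q b c by rewrite /Q; apply: divr_gt0 => //; apply: mulr_gt0.
have -> : J' (a, t) b c * ln (J' (a, t) b c * mC J' c / (mAC J' (a, t) c * mBC J' b c)) -
   J' (a, t) b c * ln (J a b c * mC J c / (mAC J a c * mBC J b c)) =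
   J' (a, t) b c * ln (J' (a, t) b c / Q b c).
  rewrite eC eBC -mulrBr -ln_div ?posrE; last 2 first.
  - by apply: divr_gt0; [apply: mulr_gt0|apply: mulr_gt0].
  - by apply: divr_gt0; [apply: mulr_gt0|apply: mulr_gt0].
  congr (_ * ln _); rewrite /Q; field.
  by rewrite (gt_eqF p1) (gt_eqF p2) (gt_eqF p3) (gt_eqF p4) (gt_eqF p5).
apply: gibbs_pt => //; exact: J0.
Qed.


Lemma cmi_refineC (A B C T : finType) (J' : A -> B -> (C * T)%type -> R) :
  (forall a b c', 0 <= J' a b c') ->
  (forall a c t, mAC J' a (c, t) * mC (fun a b c => \sum_(t : T) J' a b (c, t)) c =
                 mAC (fun a b c => \sum_(t : T) J' a b (c, t)) a c * mC J' (c, t)) ->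
  cmi (fun a b c => \sum_(t : T) J' a b (c, t)) <= cmi J'.
Proof.
move=> J0.
pose J := fun a b c => \sum_(t : T) J' a b (c, t).
rewrite -/J => Hind.
have Jge0 : forall a b c, 0 <= J a b c by move=> *; apply: sumr_ge0.
rewrite !cmiE.
under [X in _ <= X]eq_bigr => a _ do under eq_bigr => b _ do rewrite sum_pair.
have -> : \sum_a \sum_b \sum_c J a b c * ln (J a b c * mC J c / (mAC J a c * mBC J b c)) =
  \sum_a \sum_b \sum_c \sum_t J' a b (c, t) * ln (J a b c * mC J c / (mAC J a c * mBC J b c)).
  by apply: eq_bigr => a _; apply: eq_bigr => b _; apply: eq_bigr => c _; rewrite /J mulr_suml.
rewrite -subr_ge0 -sumrB.
pose Q a b c t := mBC J' b (c, t) * J a b c / mBC J b c.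
apply: (@le_trans _ _ (\sum_a \sum_b \sum_c \sum_t (J' a b (c, t) - Q a b c t))).
  rewrite exchange_big; apply: sumr_ge0 => b _; rewrite exchange_big; apply: sumr_ge0 => c _.
  rewrite exchange_big; apply: sumr_ge0 => t _; rewrite sumrB subr_ge0.
  rewrite /Q -mulr_suml -mulr_sumr.
  have [->|nz] := eqVneq (mBC J b c) 0.
    by rewrite invr0 mulr0; apply: sumr_ge0.
  by rewrite mulfK.
apply: ler_sum => a _; rewrite -sumrB; apply: ler_sum => b _; rewrite -sumrB.
apply: ler_sum => c _; rewrite -sumrB; apply: ler_sum => t _.
have Q0 : 0 <= Q a b c t.
  by rewrite /Q; apply: divr_ge0; [apply: mulr_ge0; [apply: sumr_ge0|]|apply: sumr_ge0].
have [e0|nz] := eqVneq (J' a b (c, t)) 0.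
  by rewrite e0 !mul0r subrr sub0r oppr_le0.
have Jp : 0 < J' a b (c, t) by rewrite lt0r nz J0.
have p1 : 0 < J a b c by apply: (lt_le_trans Jp); apply: (@le_term _ (fun t => J' a b (c, t))).
have p2 : 0 < mAC J a c by apply: (lt_le_trans p1); apply: (@le_term _ (fun b => J a b c)).
have p3 : 0 < mBC J b c by apply: (lt_le_trans p1); apply: (@le_term _ (fun a => J a b c)).
have p4 : 0 < mC J c.
  apply: (lt_le_trans p2); apply: (@le_term _ (fun a => mAC J a c)) => ?; exact: sumr_ge0.
have p5 : 0 < mAC J' a (c, t) by apply: (lt_le_trans Jp); apply: (@le_term _ (fun b => J' a b (c, t))).
have p6 : 0 < mBC J' b (c, t) by apply: (lt_le_trans Jp); apply: (@le_term _ (fun a => J' a b (c, t))).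
have p7 : 0 < mC J' (c, t).
  apply: (lt_le_trans p5); apply: (@le_term _ (fun a => mAC J' a (c, t))) => ?; exact: sumr_ge0.
have Qp : 0 < Q a b c t by rewrite /Q; apply: divr_gt0 => //; apply: mulr_gt0.
have eC : mC J' (c, t) = mAC J' a (c, t) * mC J c / mAC J a c.
  by rewrite Hind; field; rewrite gt_eqF.
have -> : J' a b (c, t) * ln (J' a b (c, t) * mC J' (c, t) / (mAC J' a (c, t) * mBC J' b (c, t))) -
   J' a b (c, t) * ln (J a b c * mC J c / (mAC J a c * mBC J b c)) =
   J' a b (c, t) * ln (J' a b (c, t) / Q a b c t).
  rewrite -mulrBr -ln_div ?posrE; last 2 first.
  - by apply: divr_gt0; [apply: mulr_gt0|apply: mulr_gt0].
  - by apply: divr_gt0; [apply: mulr_gt0|apply: mulr_gt0].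
  congr (_ * ln _); rewrite eC /Q; field.
  by rewrite (gt_eqF p1) (gt_eqF p2) (gt_eqF p3) (gt_eqF p4) (gt_eqF p5) (gt_eqF p6).
apply: gibbs_pt => //; exact: J0.
Qed.

End Aux.

Lemma cmi_ext (R : realType) (A B C : finType) (J1 J2 : A -> B -> C -> R) :
  (forall a b c, J1 a b c = J2 a b c) -> cmi J1 = cmi J2.
Proof.
move=> H; have -> // : J1 = J2.
by do 3 (apply: functional_extensionality => ?); apply: H.
Qed.

Lemma mACE (R : realType) (A B C : finType) (J : A -> B -> C -> R) a c :
  mAC J a c = \sum_b J a b c.
Proof. by []. Qed.
Lemma mCE (R : realType) (A B C : finType) (J : A -> B -> C -> R) c :
  mC J c = \sum_a \sum_b J a b c.
Proof. by []. Qed.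

Section Main.
Variable R : realType.
Variables X Y Z U V : finType.
Variable W : X -> Y -> Z -> R.
Variable p : U -> V -> R.
Variable q : U -> V -> X -> R.
Hypothesis q0 : forall u v x, 0 <= q u v x.
Hypothesis q1 : forall u v, \sum_x q u v x = 1.

Local Notation TT := {ffun U -> X}.
Definition pi v (t : TT) := \prod_u q u v (t u).
Definition p' u (vt : (V * TT)%type) := p u vt.1 * pi vt.1 vt.2.
Definition q' u (vt : (V * TT)%type) x : R := (x == vt.2 u)%:R.

Lemma pi_ge0 v t : 0 <= pi v t.
Proof. by apply: prodr_ge0 => u _. Qed.

Lemma sum_pi v : \sum_t pi v t = 1.
Proof.
rewrite /pi -(bigA_distr_bigA (fun u x => q u v x)).
by apply: big1 => u _; apply: q1.
Qed.

Lemma sumT u v (f : X -> R) : \sum_t pi v t * f (t u) = \sum_x q u v x * f x.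
Proof.
pose F i j := q i v j * (if i == u then f j else 1).
have e1 : \prod_i \sum_j F i j = \sum_x q u v x * f x.
  rewrite (bigD1 u) //= /F eqxx [X in _ * X]big1 ?mulr1 // => i /negbTE ->.
  by under eq_bigr => ? _ do rewrite mulr1; apply: q1.
rewrite -e1 bigA_distr_bigA /F.
apply: eq_bigr => t _; rewrite /pi big_split /=; congr (_ * _).
by rewrite (bigD1 u) //= eqxx big1 ?mulr1 // => i /negbTE ->.
Qed.

Lemma sum_delta (a : X) (g : X -> R) : \sum_x (x == a)%:R * g x = g a.
Proof.
rewrite (bigD1 a) //= eqxx mul1r big1 ?addr0 // => x /negbTE ->; exact: mul0r.
Qed.

Lemma collapse u vt (F : X -> R) : \sum_x p' u vt * q' u vt x * F x = p' u vt * F (vt.2 u).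
Proof.
under eq_bigr => x _ do rewrite -mulrA.
by rewrite -mulr_sumr /q' sum_delta.
Qed.

Lemma inner (S : finType) u v t (G : X -> S -> R) :
  \sum_x \sum_w p' u (v, t) * q' u (v, t) x * G x w = p u v * (pi v t * \sum_w G (t u) w).
Proof.
under eq_bigr => x _ do rewrite -mulr_sumr.
by rewrite collapse /p' /= mulrA.
Qed.

Lemma outer (S : finType) u v (G : X -> S -> R) :
  \sum_t p u v * (pi v t * \sum_w G (t u) w) = \sum_x \sum_w p u v * q u v x * G x w.
Proof.
rewrite -mulr_sumr (sumT u v (fun x => \sum_w G x w)) mulr_sumr.
by apply: eq_bigr => x _; rewrite mulrA mulr_sumr.
Qed.


Hypothesis p0 : forall u v, 0 <= p u v.
Hypothesis p1 : \sum_u \sum_v p u v = 1.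
Hypothesis W0 : forall x y z, 0 <= W x y z.
Hypothesis W1 : forall x, \sum_y \sum_z W x y z = 1.

Lemma eUY u y : \sum_(vt : V * TT) \sum_x \sum_z p' u vt * q' u vt x * W x y z =
  \sum_v \sum_x \sum_z p u v * q u v x * W x y z.
Proof.
rewrite sum_pair; apply: eq_bigr => v _.
under eq_bigr => t _ do rewrite (inner u v t (fun x z => W x y z)).
exact: (outer u v (fun x z => W x y z)).
Qed.

Lemma eVZ v z : \sum_t \sum_u \sum_x \sum_y p' u (v, t) * q' u (v, t) x * W x y z =
  \sum_u \sum_x \sum_y p u v * q u v x * W x y z.
Proof.
under eq_bigr => t _ do under eq_bigr => u _ do rewrite (inner u v t (fun x y => W x y z)).
rewrite exchange_big; apply: eq_bigr => u _.
exact: (outer u v (fun x y => W x y z)).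
Qed.

Lemma eVZU v z u : \sum_t \sum_x \sum_y p' u (v, t) * q' u (v, t) x * W x y z =
  \sum_x \sum_y p u v * q u v x * W x y z.
Proof.
under eq_bigr => t _ do rewrite (inner u v t (fun x y => W x y z)).
exact: (outer u v (fun x y => W x y z)).
Qed.

Lemma eUYV u y v : \sum_t \sum_x \sum_z p' u (v, t) * q' u (v, t) x * W x y z =
  \sum_x \sum_z p u v * q u v x * W x y z.
Proof.
under eq_bigr => t _ do rewrite (inner u v t (fun x z => W x y z)).
exact: (outer u v (fun x z => W x y z)).
Qed.

Lemma mACJ' u v t : \sum_y \sum_x \sum_z p' u (v, t) * q' u (v, t) x * W x y z = p u v * pi v t.
Proof.
under eq_bigr => y _ do rewrite (inner u v t (fun x z => W x y z)).
by rewrite -mulr_sumr -mulr_sumr W1 mulr1.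
Qed.

Lemma P'_ge0 u vt x y z : 0 <= p' u vt * q' u vt x * W x y z.
Proof. by rewrite /p' /q'; apply: mulr_ge0; [apply: mulr_ge0; [apply: mulr_ge0; [apply: p0|apply: pi_ge0]|apply: ler0n]|apply: W0]. Qed.

Lemma indep (G : U -> Y -> (V * TT)%type -> R) :
  (forall a vt, \sum_b G a b vt = p a vt.1 * pi vt.1 vt.2) ->
  forall u v t, mAC G u (v, t) * mC (fun a b c => \sum_(t : TT) G a b (c, t)) v =
    mAC (fun a b c => \sum_(t : TT) G a b (c, t)) u v * mC G (v, t).
Proof.
move=> HG u v t; rewrite !mACE !mCE.
have S a : \sum_b \sum_(t0 : TT) G a b (v, t0) = p a v.
  rewrite exchange_big; apply: etrans.
    by apply: eq_bigr => t0 _; exact: (HG a (v, t0)).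
  by rewrite /= -mulr_sumr sum_pi mulr1.
rewrite [X in X * _ = _](_ : _ = p u v * pi v t); last exact: (HG u (v, t)).
rewrite [X in _ = _ * X](_ : _ = \sum_a p a v * pi v t); last first.
  by apply: eq_bigr => a _; exact: (HG a (v, t)).
rewrite [X in _ * X = _](_ : _ = \sum_a p a v); last by apply: eq_bigr => a _; apply: S.
rewrite [X in _ = X * _](_ : _ = p u v); last by apply: S.
by rewrite -mulr_suml; ring.
Qed.

Lemma ineq1 : mi (fun u y => \sum_v \sum_x \sum_z p u v * q u v x * W x y z) =
  mi (fun u y => \sum_(vt : V * TT) \sum_x \sum_z p' u vt * q' u vt x * W x y z).
Proof. by apply: cmi_ext => u y _; rewrite eUY. Qed.

Lemma ineq2 : mi (fun v z => \sum_u \sum_x \sum_y p u v * q u v x * W x y z) <=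
  mi (fun vt z => \sum_u \sum_x \sum_y p' u vt * q' u vt x * W x y z).
Proof.
pose J' := fun (vt : (V * TT)%type) z (_ : unit) => \sum_u \sum_x \sum_y p' u vt * q' u vt x * W x y z.
have := @cmi_coarsenA R V Z unit TT J'.
rewrite /mi /J' (@cmi_ext _ _ _ _ _ (fun v z (_ : unit) => \sum_u \sum_x \sum_y p u v * q u v x * W x y z)).
  apply => *; do 3 (apply: sumr_ge0 => * ); exact: P'_ge0.
by move=> v z _; rewrite eVZ.
Qed.

Lemma ineq3 : cmi (fun v z u => \sum_x \sum_y p u v * q u v x * W x y z) <=
  cmi (fun vt z u => \sum_x \sum_y p' u vt * q' u vt x * W x y z).
Proof.
pose J' := fun (vt : (V * TT)%type) z u => \sum_x \sum_y p' u vt * q' u vt x * W x y z.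
have := @cmi_coarsenA R V Z U TT J'.
rewrite /J' (@cmi_ext _ _ _ _ _ (fun v z u => \sum_x \sum_y p u v * q u v x * W x y z)).
  apply => *; do 2 (apply: sumr_ge0 => * ); exact: P'_ge0.
by move=> v z u; rewrite eVZU.
Qed.

Lemma ineq4 : cmi (fun u y v => \sum_x \sum_z p u v * q u v x * W x y z) <=
  cmi (fun u y vt => \sum_x \sum_z p' u vt * q' u vt x * W x y z).
Proof.
pose J' := fun u y (vt : (V * TT)%type) => \sum_x \sum_z p' u vt * q' u vt x * W x y z.
have := @cmi_refineC R U Y V TT J'.
rewrite /J' (@cmi_ext _ _ _ _ _ (fun u y v => \sum_x \sum_z p u v * q u v x * W x y z)).
- apply.
  + move=> *; do 2 (apply: sumr_ge0 => * ); exact: P'_ge0.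
  + by apply: indep => a [v t]; apply: mACJ'.
- by move=> u y v; rewrite eUYV.
Qed.

End Main.

Unset Implicit Arguments.
Set Strict Implicit.

Theorem lemma3p2 (R : realType) (X Y Z : finType) (W : X -> Y -> Z -> R) :
  is_bc_channel W ->
  forall R1 R2 : R, bc_region false W R1 R2 <-> bc_region true W R1 R2.
Proof.
move=> [W0 W1] R1 R2; split; last first.
  case=> U [V [p [q [hp [hq [_ H]]]]]].
  by exists U, V, p, q; do 3 (split => //).
case=> U [V [p [q [[p0 p1] [[q0 q1] [_ H]]]]]].
case: H => h1 h2 h3 h4.
exists U, (V * {ffun U -> X})%type, (@p' R X U V p q), (@q' R X U V).
split; [split|split; [split|split]].
- by move=> u [v t]; rewrite /p'; apply: mulr_ge0; [apply: p0|apply: pi_ge0].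
- rewrite -p1; apply: eq_bigr => u _; rewrite sum_pair; apply: eq_bigr => v _.
  by rewrite /p' /= -mulr_sumr sum_pi // mulr1.
- by move=> u [v t] x; rewrite /q' ler0n.
- move=> u [v t]; rewrite /q' /=; apply: etrans (sum_delta (t u) (fun _ => 1)).
  by apply: eq_bigr => x _; rewrite mulr1.
- by move=> _ u [v t] x; rewrite /q'; case: (x == _); [right|left].
- have e1 := ineq1 W p q1.
  have e2 := ineq2 q0 q1 p0 W0.
  have e3 := ineq3 q0 q1 p0 W0.
  have e4 := ineq4 q0 q1 p0 W0 W1.
  have e1a : mi (fun (u : U) (y : Y) => \sum_v \sum_x \sum_z p u v * q u v x * W x y z) <= mi (fun (u : U) (y : Y) => \sum_(vt : (V * {ffun U -> X})%type) \sum_x \sum_z p' p q u vt * q' R u vt x * W x y z) by rewrite e1.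
  split.
  + exact: (le_trans h1 e1a).
  + exact: (le_trans h2 e2).
  + exact: (le_trans h3 (lerD e1a e3)).
  + exact: (le_trans h4 (lerD e2 e4)).
Qed.
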